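(* Let $s\in(0,1)$. The function $\tau^n_s:[0,2\pi]\to[0,\infty]$ is increasing on $[0,2\pi]$.
   Context: For $n\ge1$ and $s\in(0,1)$, $\tau^n_s(2\pi)=+\infty$, $\tau^n_s(0)=s^{\frac{2n+3}{2n+1}}$, and for $\theta\in(0,2\pi)$, $$\tau^n_s(\theta)=s^{\frac1{2n+1}}\left(\frac{\sin\frac{\theta s}{2}}{\sin\frac{\theta}{2}}\right)^{\frac{2n-1}{2n+1}}\left(\frac{\sin\frac{\theta s}{2}-\frac{\theta s}{2}\cos\frac{\theta s}{2}}{\sin\frac{\theta}{2}-\frac{\theta}{2}\cos\frac{\theta}{2}}\right)^{\frac1{2n+1}}.$$ *)

(* Defs.v *)
From Stdlib Require Import Reals.
From Coquelicot Require Import Coquelicot.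
Open Scope R_scope.

Definition sxc (x : R) : R := sin x - x * cos x.

Definition tau (n : nat) (s theta : R) : Rbar :=
  let N := INR (2 * n + 1) in
  if Req_EM_T theta (2 * PI) then p_infty
  else if Req_EM_T theta 0 then Finite (Rpower s ((2 * INR n + 3) / N))
  else Finite (Rpower s (1 / N)
               * Rpower (sin (theta * s / 2) / sin (theta / 2)) ((2 * INR n - 1) / N)
               * Rpower (sxc (theta * s / 2) / sxc (theta / 2)) (1 / N)).

(* Main.v *)
Require Import Defs.
From Stdlib Require Import Reals Lra Psatz.
From Coquelicot Require Import Coquelicot.
Open Scope R_scope.

Lemma mvt_pos (f f' : R -> R) a b : a < b ->
  (forall c, a <= c <= b -> is_derive f c (f' c)) ->
  (forall c, a < c < b -> 0 < f' c) -> f a < f b.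
Proof.
  intros Hab Hd Hp.
  destruct (MVT_cor2 f f' a b Hab) as [c [Hc1 Hc2]].
  - intros c Hc. apply is_derive_Reals, Hd, Hc.
  - specialize (Hp c Hc2). nra.
Qed.

Section S.
Variable s : R.
Hypothesis Hs : 0 < s < 1.

Lemma sin_sx x : 0 < x <= PI -> 0 < sin (s * x).
Proof. intros. apply sin_gt_0; nra. Qed.

Lemma sin_x x : 0 < x < PI -> 0 < sin x.
Proof. intros; apply sin_gt_0; lra. Qed.

Lemma m_pos x : 0 < x <= PI -> 0 < s * cos (s * x) * sin x - sin (s * x) * cos x.
Proof.
  intros Hx.
  set (m := fun x => s * cos (s * x) * sin x - sin (s * x) * cos x).
  change (0 < m x). replace 0 with (m 0) by (unfold m; rewrite Rmult_0_r, sin_0; ring).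
  apply (mvt_pos m (fun x => (1 - s^2) * sin (s*x) * sin x)); [lra| |].
  - intros c _. unfold m. auto_derive; [easy|]. ring.
  - intros c Hc. pose proof (sin_sx c ltac:(lra)). pose proof (sin_x c ltac:(lra)).
    apply Rmult_lt_0_compat; [|lra]. apply Rmult_lt_0_compat; nra.
Qed.

Lemma q_incr x y : 0 < x -> x < y -> y < PI ->
  sin (s * x) / sin x < sin (s * y) / sin y.
Proof.
  intros Hx Hxy Hy.
  apply (mvt_pos (fun x => sin (s * x) / sin x)
    (fun x => (s * cos (s * x) * sin x - sin (s * x) * cos x) / (sin x)^2)); [lra| |].
  - intros c Hc. pose proof (sin_x c ltac:(lra)). auto_derive; [lra|]. field. lra.
  - intros c Hc. pose proof (sin_x c ltac:(lra)). pose proof (m_pos c ltac:(lra)).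
    apply Rdiv_lt_0_compat; nra.
Qed.

Lemma q_gt x : 0 < x <= PI -> s * sin x < sin (s * x).
Proof.
  intros Hx. apply Rminus_gt_0_lt.
  set (p := fun x => sin (s * x) - s * sin x).
  change (0 < p x). replace 0 with (p 0) by (unfold p; rewrite Rmult_0_r, sin_0; ring).
  apply (mvt_pos p (fun x => s * (cos (s*x) - cos x))); [lra| |].
  - intros c _. unfold p. auto_derive; [easy|]. ring.
  - intros c Hc. apply Rmult_lt_0_compat; [lra|].
    apply Rlt_Rminus, cos_decreasing_1; nra.
Qed.

Lemma sxc_pos x : 0 < x <= PI -> 0 < sxc x.
Proof.
  intros Hx. replace 0 with (sxc 0) by (unfold sxc; rewrite sin_0; ring).
  apply (mvt_pos sxc (fun x => x * sin x)); [lra| |].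
  - intros c _. unfold sxc. auto_derive; [easy|]. ring.
  - intros c Hc. pose proof (sin_x c ltac:(lra)). nra.
Qed.

Lemma B_gt x : 0 < x <= PI -> s^3 * sxc x < sxc (s * x).
Proof.
  intros Hx. apply Rminus_gt_0_lt.
  set (p := fun x => sxc (s * x) - s^3 * sxc x).
  change (0 < p x). replace 0 with (p 0) by (unfold p, sxc; rewrite Rmult_0_r, sin_0; ring).
  apply (mvt_pos p (fun x => s^2 * x * (sin (s*x) - s * sin x))); [lra| |].
  - intros c _. unfold p, sxc. auto_derive; [easy|]. ring.
  - intros c Hc. pose proof (q_gt c ltac:(lra)).
    apply Rmult_lt_0_compat; [apply Rmult_lt_0_compat; [apply pow_lt; lra|lra]|lra].
Qed.

Lemma chi2 x0 : 0 < x0 < PI ->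
  sxc (s * x0) < s^2 * (sin (s * x0) / sin x0) * sxc x0.
Proof.
  intros Hx. apply Rminus_gt_0_lt.
  set (r := s^2 * (sin (s * x0) / sin x0)).
  set (p := fun x => r * sxc x - sxc (s * x)).
  change (0 < p x0). replace 0 with (p 0) by (unfold p, sxc; rewrite Rmult_0_r, sin_0; ring).
  apply (mvt_pos p (fun x => x * sin x * (r - s^2 * (sin (s * x) / sin x)))); [lra| |].
  - intros c Hc. unfold p, sxc. auto_derive; [easy|].
    destruct (Req_dec c 0) as [->|Hc0].
    + rewrite !Rmult_0_l, !Rmult_0_r. ring.
    + destruct Hc as [Hc1 Hc2]. pose proof (sin_x c ltac:(lra)). field. lra.
  - intros c Hc. pose proof (sin_x c ltac:(lra)).
    pose proof (q_incr c x0 ltac:(lra) ltac:(lra) ltac:(lra)).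
    apply Rmult_lt_0_compat; [nra|]. unfold r. pose proof (pow_lt s 2 ltac:(lra)). nra.
Qed.

Lemma q2_incr x y : 0 < x -> x < y -> y < PI ->
  sxc (s * x) / sxc x < sxc (s * y) / sxc y.
Proof.
  intros Hx Hxy Hy.
  apply (mvt_pos (fun x => sxc (s * x) / sxc x)
    (fun x => (s^2 * x * sin (s * x) * sxc x - sxc (s * x) * (x * sin x)) / (sxc x)^2)); [lra| |].
  - intros c Hc. pose proof (sxc_pos c ltac:(lra)). unfold sxc in *. auto_derive; [lra|]. field. lra.
  - intros c Hc. pose proof (sin_x c ltac:(lra)). pose proof (sxc_pos c ltac:(lra)).
    pose proof (chi2 c ltac:(lra)).
    apply Rdiv_lt_0_compat; [|nra].
    replace (s ^ 2 * c * sin (s * c) * sxc c - sxc (s * c) * (c * sin c))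
      with (c * sin c * (s ^ 2 * (sin (s * c) / sin c) * sxc c - sxc (s * c))) by (field; lra).
    apply Rmult_lt_0_compat; nra.
Qed.
End S.

Lemma key_bounds s t : 0 < s < 1 -> 0 < t < 2 * PI ->
  let A := sin (t * s / 2) / sin (t / 2) in
  let B := sxc (t * s / 2) / sxc (t / 2) in
  s < A /\ s ^ 3 < B.
Proof.
  intros Hs Ht A B. unfold A, B.
  replace (t * s / 2) with (s * (t / 2)) by field.
  assert (Hx : 0 < t / 2 < PI) by lra.
  pose proof (sin_x (t/2) Hx). pose proof (sxc_pos (t/2) ltac:(lra)).
  pose proof (q_gt s Hs (t/2) ltac:(lra)). pose proof (B_gt s Hs (t/2) ltac:(lra)).
  split.
  - apply Rmult_lt_reg_r with (r := sin (t/2)); [lra|].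
    unfold Rdiv; rewrite Rmult_assoc, Rinv_l, Rmult_1_r; lra.
  - apply Rmult_lt_reg_r with (r := sxc (t/2)); [lra|].
    unfold Rdiv; rewrite Rmult_assoc, Rinv_l, Rmult_1_r; lra.
Qed.

Lemma key_mono s t1 t2 : 0 < s < 1 -> 0 < t1 -> t1 < t2 -> t2 < 2 * PI ->
  sin (t1 * s / 2) / sin (t1 / 2) < sin (t2 * s / 2) / sin (t2 / 2) /\
  sxc (t1 * s / 2) / sxc (t1 / 2) < sxc (t2 * s / 2) / sxc (t2 / 2).
Proof.
  intros Hs H1 H12 H2.
  replace (t1 * s / 2) with (s * (t1 / 2)) by field.
  replace (t2 * s / 2) with (s * (t2 / 2)) by field.
  split; [apply q_incr|apply q2_incr]; lra.
Qed.

Theorem lemma2p1 (n : nat) (s : R) :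
  (1 <= n)%nat -> 0 < s < 1 ->
  forall theta1 theta2 : R,
    0 <= theta1 -> theta1 < theta2 -> theta2 <= 2 * PI ->
    Rbar_lt (tau n s theta1) (tau n s theta2).
Proof.
  intros Hn Hs t1 t2 H1 H12 H2.
  assert (HnR : 1 <= INR n) by (apply (le_INR 1); exact Hn).
  assert (HN : INR (2 * n + 1) = 2 * INR n + 1) by (rewrite plus_INR, mult_INR; simpl; ring).
  unfold tau. rewrite HN.
  destruct (Req_EM_T t1 (2 * PI)) as [E|_]; [lra|].
  destruct (Req_EM_T t2 (2 * PI)) as [E2|N2].
  { destruct (Req_EM_T t1 0); simpl; exact I. }
  destruct (Req_EM_T t2 0) as [E|_]; [lra|].
  assert (Ha : 0 < 1 / (2 * INR n + 1)) by (apply Rdiv_lt_0_compat; lra).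
  assert (He : 0 < (2 * INR n - 1) / (2 * INR n + 1)) by (apply Rdiv_lt_0_compat; lra).
  destruct (key_bounds s t2 Hs ltac:(lra)) as [A2 B2].
  destruct (Req_EM_T t1 0) as [E1|N1];
  simpl; unfold Rpower; rewrite <- !exp_plus; apply exp_increasing.
  - assert (L1 : ln s < ln (sin (t2 * s / 2) / sin (t2 / 2))) by (apply ln_increasing; lra).
    assert (L2 : ln (s^3) < ln (sxc (t2 * s / 2) / sxc (t2 / 2))).
    { apply ln_increasing; [apply pow_lt; lra| lra]. }
    rewrite ln_pow in L2 by lra. simpl INR in L2.
    replace ((2 * INR n + 3) / (2 * INR n + 1)) with
      (1 / (2 * INR n + 1) + (2 * INR n - 1) / (2 * INR n + 1) + 3 * (1 / (2 * INR n + 1)))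
      by (field; lra).
    set (a := 1 / (2 * INR n + 1)) in *. set (e := (2 * INR n - 1) / (2 * INR n + 1)) in *.
    nra.
  - destruct (key_bounds s t1 Hs ltac:(lra)) as [A1 B1].
    destruct (key_mono s t1 t2 Hs ltac:(lra) H12 ltac:(lra)) as [M1 M2].
    assert (L1 : ln (sin (t1 * s / 2) / sin (t1 / 2)) < ln (sin (t2 * s / 2) / sin (t2 / 2)))
      by (apply ln_increasing; lra).
    assert (L2 : ln (sxc (t1 * s / 2) / sxc (t1 / 2)) < ln (sxc (t2 * s / 2) / sxc (t2 / 2))).
    { apply ln_increasing; [|lra]. pose proof (pow_lt s 3 ltac:(lra)). lra. }
    set (a := 1 / (2 * INR n + 1)) in *. set (e := (2 * INR n - 1) / (2 * INR n + 1)) in *.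
    nra.
Qed.
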